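(* For every constant $A\in\mathbb{N}$ there is a family $(\mathcal{V}_n)_{n\in\mathbb{N}}$ of VASS, each with two $\mathbb{N}$-counters and some number of $\mathbb{Z}$-counters, such that the size of $\mathcal{V}_n$ is polynomial in $n$ and $\mathcal{V}_n$ computes the set $\{(A^{2^n},\,B,\,B\cdot A^{2^n}) : B\in\mathbb{N}\}\subseteq\mathbb{Z}^3$.
   Context: A VASS with $d$ $\mathbb{N}$-counters and $k$ $\mathbb{Z}$-counters consists of a finite set $Q$ of states and a finite set $T\subseteq Q\times\mathbb{Z}^{d+k}\times Q$ of transitions. A configuration is $p(\mathbf{u})$ with $p\in Q$, $\mathbf{u}\in\mathbb{N}^d\times\mathbb{Z}^k$. A transition $(p,\mathbf{v},q)$ can be fired from $p(\mathbf{u})$, leading to $q(\mathbf{u}+\mathbf{v})$, provided the first $d$ coordinates of $\mathbf{u}+\mathbf{v}$ are nonnegative. Size is measured with numbers in unary: $|Q|+\sum_{(p,\mathbf{v},q)\in T}\|\mathbf{v}\|_1$. For $\mathbf{u}\in\mathbb{Z}^m$, write $\mathbf{u}\oplus 0^{j}$ for $\mathbf{u}$ padded with $j$ zeros. Such a VASS computes a set $S\subseteq\mathbb{Z}^m$ if there are distinguished states $q_I,q_F$ such that $S$ equals the set of $\mathbf{v}$ for which there is a run from $q_I(0^{d+k})$ to $q_F(\mathbf{v}\oplus 0^{d+k-m})$ (the vector $\mathbf{v}$ may occupy both $\mathbb{N}$- and $\mathbb{Z}$-counters). *)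

(* Defs.v *)
From Stdlib Require Import ZArith List Relations.
Import ListNotations.
Open Scope Z_scope.

(* A VASS with d N-counters and k Z-counters.  States are the naturals
   0 .. nstates-1; transitions are triples (p, v, q). *)
Record VASS := mkVASS {
  nstates : nat;
  trans : list (nat * list Z * nat)
}.

Definition wf_VASS (d k : nat) (V : VASS) : Prop :=
  forall p v q, In (p, v, q) (trans V) ->
    (p < nstates V)%nat /\ (q < nstates V)%nat /\ length v = (d + k)%nat.

Definition norm1 (v : list Z) : nat :=
  fold_right (fun x acc => (Z.abs_nat x + acc)%nat) 0%nat v.

(* size = |Q| + sum over transitions of ||v||_1 (unary encoding). *)
Definition vass_size (V : VASS) : nat :=
  (nstates V + fold_right (fun t acc => (norm1 (snd (fst t)) + acc)%nat) 0%nat (trans V))%nat.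

Definition vadd (u v : list Z) : list Z :=
  map (fun p => fst p + snd p) (combine u v).

Definition step (d : nat) (V : VASS) (c c' : nat * list Z) : Prop :=
  exists v, In (fst c, v, fst c') (trans V) /\
    snd c' = vadd (snd c) v /\
    forall i, (i < d)%nat -> 0 <= nth i (snd c') 0.

Definition reach (d : nat) (V : VASS) : relation (nat * list Z) :=
  clos_refl_trans _ (step d V).

Definition zeros (n : nat) : list Z := repeat 0 n.

Definition computes (d k m : nat) (V : VASS) (S : list Z -> Prop) : Prop :=
  (m <= d + k)%nat /\
  (forall v, S v -> length v = m) /\
  exists qI qF, (qI < nstates V)%nat /\ (qF < nstates V)%nat /\
    forall v, length v = m ->
      (S v <-> reach d V (qI, zeros (d + k)) (qF, v ++ zeros (d + k - m))).

Definition target_set (a : Z) : list Z -> Prop :=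
  fun w => exists B : nat, w = [a; Z.of_nat B; Z.of_nat B * a].

(* Main.v *)
Require Import Defs.
From Stdlib Require Import ZArith List Lia FunctionalExtensionality Relations.
Import ListNotations.

Section Dev.
Local Open Scope Z_scope.
Variables (A n : nat).
Definition Az := Z.of_nat A.
Definition NN : nat := (4 + 7 * (n + 2))%nat.

Definition ghost := nat -> nat -> Z.
Definition gplus (G H : ghost) : ghost := fun k l => G k l + H k l.
Definition unitg (k l : nat) : ghost :=
  fun k' l' => if (Nat.eqb k' k && Nat.eqb l' l && Nat.ltb k 15)%bool then 1 else 0.
Definition upd (G : ghost) k l := gplus G (unitg k l).

Definition Rg (G : ghost) l := G 1%nat l + G 2%nat l + G 3%nat l + G 4%nat l.
Definition Sg (G : ghost) l := G 5%nat l + G 6%nat l + G 7%nat l + G 8%nat l + G 0%nat l.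
Definition prevK (G : ghost) l := match l with O => G 11%nat O | S l' => G 1%nat l' end.
Definition prevQ (G : ghost) l := match l with O => 2 * Az * G 11%nat O | S l' => 2 * G 6%nat l' end.
Definition prevH (G : ghost) l := match l with O => Az * G 10%nat O | S l' => G 3%nat l' + G 9%nat l end.
Definition isn l (x : Z) := if Nat.eqb l n then x else 0.

Definition cnt (G : ghost) (l m : nat) : Z :=
  match m with
  | O => prevK G l - Rg G l
  | 1%nat => match l with O => 0 | S l' => G 5%nat l' - G 2%nat l' end
  | 2%nat => prevQ G l - Sg G l
  | 3%nat => prevH G l - G 3%nat l - isn l (G 14%nat O)
  | 4%nat => match l with O => 0 | S l' => G 7%nat l' - G 3%nat l' - G 9%nat l end
  | 5%nat => G 8%nat l - isn l (G 13%nat O)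
  | _ => G 4%nat l - isn l (G 12%nat O)
  end.

Definition Fvec (G : ghost) (j : nat) : Z :=
  if Nat.eqb j 2 then G 13%nat O
  else if Nat.ltb j 4 then 0
  else cnt G ((j - 4) / 7) ((j - 4) mod 7).

Lemma Fvec_code G l m : (m < 7)%nat -> Fvec G (4 + 7 * l + m) = cnt G l m.
Proof.
  intros Hm. unfold Fvec.
  destruct (Nat.eqb_spec (4 + 7 * l + m) 2); [lia|].
  destruct (Nat.ltb_spec (4 + 7 * l + m) 4); [lia|].
  replace (4 + 7 * l + m - 4)%nat with (m + l * 7)%nat by lia.
  rewrite Nat.div_add, Nat.Div0.mod_add by lia.
  rewrite Nat.div_small, Nat.mod_small by lia. reflexivity.
Qed.

Lemma Fvec_lin G H j : Fvec (gplus G H) j = Fvec G j + Fvec H j.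
Proof.
  unfold Fvec.
  destruct (Nat.eqb j 2). { unfold gplus; ring. }
  destruct (Nat.ltb j 4). { ring. }
  generalize ((j - 4) / 7)%nat ((j - 4) mod 7)%nat. intros l m.
  unfold cnt, gplus, Rg, Sg, prevK, prevQ, prevH, isn.
  destruct m as [|[|[|[|[|[|m]]]]]]; destruct l; try destruct (Nat.eqb _ n); ring.
Qed.

Lemma Fvec_upd G k l j : Fvec (upd G k l) j = Fvec G j + Fvec (unitg k l) j.
Proof. apply Fvec_lin. Qed.

Definition zerog : ghost := fun _ _ => 0.
Lemma Fvec_zero j : Fvec zerog j = 0.
Proof.
  unfold Fvec. destruct (Nat.eqb j 2); [reflexivity|]. destruct (Nat.ltb j 4); [reflexivity|].
  generalize ((j - 4) / 7)%nat ((j - 4) mod 7)%nat. intros l m.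
  unfold cnt, zerog, Rg, Sg, prevK, prevQ, prevH, isn.
  destruct m as [|[|[|[|[|[|m]]]]]]; destruct l; try destruct (Nat.eqb _ n); ring.
Qed.

Lemma Fvec_bound H j : (forall k l, 0 <= H k l <= 1) -> Z.abs (Fvec H j) <= 2 * Az + 10.
Proof.
  intros HH. assert (HA : 0 <= Az) by (unfold Az; lia).
  assert (HA1 : forall k l, 0 <= Az * H k l <= Az).
  { intros k l. specialize (HH k l). nia. }
  unfold Fvec.
  destruct (Nat.eqb j 2). { specialize (HH 13%nat O). lia. }
  destruct (Nat.ltb j 4). { lia. }
  generalize ((j - 4) / 7)%nat ((j - 4) mod 7)%nat. intros l m.
  unfold cnt, Rg, Sg, prevK, prevQ, prevH, isn.
  destruct m as [|[|[|[|[|[|m]]]]]]; destruct l; try destruct (Nat.eqb _ n);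
  repeat match goal with |- context [H ?k ?l] => 
    let h := fresh in pose proof (HH k l) as h; pose proof (HA1 k l);
    generalize dependent (H k l); intros end; lia.
Qed.


Definition st (i r : nat) : nat := (2 + 7 * i + r)%nat.

Record spec := mkS { src : nat; knd : nat; lvl : nat; d0 : Z; d1 : Z; tgt : nat }.

Definition lev (i : nat) : list spec :=
  flat_map (fun l => [mkS (st i 0) (1 + l) i 0 0 (st i (1 + l));
                      mkS (st i (1 + l)) (5 + l) i (-1) 1 (st i (1 + l));
                      mkS (st i (1 + l)) 15 0 0 0 (st i 5)]) [0;1;2;3]%nat
  ++ [mkS (st i 5) 0 i 1 (-1) (st i 5); mkS (st i 5) 15 0 0 0 (st i 0)].

Definition fil (i : nat) : list spec :=
  [mkS (st (i - 1) 0) 15 0 0 0 (st i 6); mkS (st i 6) 9 i 1 0 (st i 6);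
   mkS (st i 6) 15 0 0 0 (st i 0)].

Definition glob : list spec :=
  [mkS 0 10 0 Az 0 (st 0 0); mkS (st 0 0) 11 0 0 0 (st 0 0); mkS (st n 0) 15 0 0 0 1;
   mkS 1 12 0 0 1 1; mkS 1 13 0 0 0 1; mkS 1 14 0 0 0 1].

Definition specs : list spec := glob ++ flat_map lev (seq 0 (S n)) ++ flat_map fil (seq 1 n).

Definition mkvec (f : nat -> Z) : list Z := map f (seq 0 NN).
Definition tvec (s : spec) (j : nat) : Z :=
  if Nat.eqb j 0 then d0 s else if Nat.eqb j 1 then d1 s else Fvec (unitg (knd s) (lvl s)) j.
Definition mkT (s : spec) : nat * list Z * nat := (src s, mkvec (tvec s), tgt s).

Definition VV : VASS := mkVASS (9 + 7 * n) (map mkT specs).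

Lemma in_specs s : In s specs ->
  s = mkS 0 10 0 Az 0 (st 0 0) \/ s = mkS (st 0 0) 11 0 0 0 (st 0 0) \/ s = mkS (st n 0) 15 0 0 0 1 \/
  s = mkS 1 12 0 0 1 1 \/ s = mkS 1 13 0 0 0 1 \/ s = mkS 1 14 0 0 0 1 \/
  (exists i l, (i <= n)%nat /\ (l < 4)%nat /\
     (s = mkS (st i 0) (1 + l) i 0 0 (st i (1 + l)) \/
      s = mkS (st i (1 + l)) (5 + l) i (-1) 1 (st i (1 + l)) \/
      s = mkS (st i (1 + l)) 15 0 0 0 (st i 5))) \/
  (exists i, (i <= n)%nat /\ (s = mkS (st i 5) 0 i 1 (-1) (st i 5) \/ s = mkS (st i 5) 15 0 0 0 (st i 0))) \/
  (exists i, (1 <= i <= n)%nat /\ (s = mkS (st (i - 1) 0) 15 0 0 0 (st i 6) \/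
     s = mkS (st i 6) 9 i 1 0 (st i 6) \/ s = mkS (st i 6) 15 0 0 0 (st i 0))).
Proof.
  unfold specs. rewrite !in_app_iff, !in_flat_map. intros [H|[[i [Hi H]]|[i [Hi H]]]].
  - simpl in H. repeat (destruct H as [<-|H]; [tauto|]); destruct H.
  - apply in_seq in Hi. unfold lev in H. rewrite in_app_iff, in_flat_map in H.
    destruct H as [[l [Hl H]]|H].
    + do 6 right. left. exists i, l. simpl in Hl.
      split; [lia|]. split; [intuition lia|]. simpl in H.
      repeat (destruct H as [<-|H]; [tauto|]); destruct H.
    + do 7 right. left. exists i. split; [lia|]. simpl in H.
      repeat (destruct H as [<-|H]; [tauto|]); destruct H.
  - apply in_seq in Hi. do 8 right. exists i. split; [lia|]. simpl in H.
    repeat (destruct H as [<-|H]; [tauto|]); destruct H.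
Qed.


Fixpoint cont (G : ghost) (i : nat) : Z :=
  match i with O => Az * G 10%nat O | S i' => cont G i' + G 9%nat i end.
Definition def (G : ghost) i l := cont G i * G (1 + l)%nat i - G (5 + l)%nat i.
Definition E2 (G : ghost) i := cont G i * Rg G i - G 0%nat i.
Definition doneg (G : ghost) j := (forall l, (l < 4)%nat -> 0 <= def G j l) /\ 0 <= E2 G j.
Fixpoint Tg (G : ghost) (i : nat) : Z :=
  match i with O => E2 G O | S i' => Tg G i' + E2 G i end.

Definition Pre i (G : ghost) := G 10%nat O = 1 /\ G 12%nat O = 0 /\
  forall l k, (i < l)%nat -> (k <= 9)%nat -> G k l = 0.

Definition ISrs i G x0 x1 := Pre i G /\ (forall j, (j <= i)%nat -> doneg G j) /\ x1 <= Tg G i /\ x0 + x1 = cont G i.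
Definition ISh1 i l G x0 x1 := Pre i G /\ (forall j, (j < i)%nat -> doneg G j) /\
  (forall l', (l' < 4)%nat -> l' <> l -> 0 <= def G i l') /\ cont G i <= def G i l + x1 /\
  cont G i <= E2 G i /\ x0 + x1 = cont G i.
Definition ISh2 i G x0 x1 := Pre i G /\ (forall j, (j < i)%nat -> doneg G j) /\
  (forall l, (l < 4)%nat -> 0 <= def G i l) /\ x1 <= E2 G i /\ x0 + x1 = cont G i.
Definition ISfill i G x0 x1 := (1 <= i)%nat /\ Pre i G /\ (forall k, (k <= 8)%nat -> G k i = 0) /\
  (forall j, (j < i)%nat -> doneg G j) /\ x1 <= Tg G (i - 1) /\ x0 + x1 = cont G i.
Definition ISfin (G : ghost) x0 x1 := G 10%nat O = 1 /\ (forall j, (j <= n)%nat -> doneg G j) /\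
  0 <= x1 - G 12%nat O <= Tg G n /\ x0 + x1 = cont G n + G 12%nat O.
Definition ISq0 (G : ghost) (x0 x1 : Z) := (forall k l, G k l = 0) /\ x0 = 0 /\ x1 = 0.

Definition ISlev i r G x0 x1 :=
  match r with
  | O => ISrs i G x0 x1 | 1%nat => ISh1 i 0 G x0 x1 | 2%nat => ISh1 i 1 G x0 x1
  | 3%nat => ISh1 i 2 G x0 x1 | 4%nat => ISh1 i 3 G x0 x1 | 5%nat => ISh2 i G x0 x1
  | _ => ISfill i G x0 x1 end.

Definition IS q G x0 x1 :=
  match q with
  | O => ISq0 G x0 x1 | 1%nat => ISfin G x0 x1
  | S (S q') => ((q' / 7) <= n)%nat /\ ISlev (q' / 7) (q' mod 7) G x0 x1 end.

Lemma IS_st i r G x0 x1 : (r < 7)%nat -> IS (st i r) G x0 x1 <-> (i <= n)%nat /\ ISlev i r G x0 x1.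
Proof.
  intros Hr. unfold st. replace (2 + 7 * i + r)%nat with (S (S (r + i * 7))) by lia.
  assert (E : forall q', IS (S (S q')) G x0 x1 = (((q' / 7) <= n)%nat /\ ISlev (q' / 7) (q' mod 7) G x0 x1))
    by reflexivity.
  rewrite E. rewrite Nat.div_add, Nat.Div0.mod_add by lia.
  rewrite Nat.div_small, Nat.mod_small by lia. simpl. tauto.
Qed.

Lemma ISlev_h1 i l G x0 x1 : (l < 4)%nat -> ISlev i (1 + l) G x0 x1 <-> ISh1 i l G x0 x1.
Proof. intros Hl. destruct l as [|[|[|[|l]]]]; simpl; try tauto; lia. Qed.

Definition agree (i : nat) (G H : ghost) := G 10%nat O = H 10%nat O /\
  forall j, (j <= i)%nat -> forall k, (k <= 9)%nat -> G k j = H k j.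

Lemma cont_agree i G H : agree i G H -> cont G i = cont H i.
Proof.
  intros [H10 Hj]. induction i; simpl. { rewrite H10; ring. }
  rewrite IHi by (intros; apply Hj; lia). rewrite (Hj (S i)) by lia. ring.
Qed.

Lemma agree_le i i' G H : (i' <= i)%nat -> agree i G H -> agree i' G H.
Proof. intros Hle [H1 H2]. split; auto. intros; apply H2; lia. Qed.

Lemma def_agree i G H l : (l < 4)%nat -> agree i G H -> def G i l = def H i l.
Proof.
  intros Hl Ha. unfold def. rewrite (cont_agree i G H Ha).
  destruct Ha as [_ Hj]. rewrite !(Hj i) by lia. ring.
Qed.

Lemma E2_agree i G H : agree i G H -> E2 G i = E2 H i.
Proof.
  intros Ha. unfold E2, Rg. rewrite (cont_agree i G H Ha).
  destruct Ha as [_ Hj]. rewrite !(Hj i) by lia. ring.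
Qed.

Lemma done_agree i j G H : (j <= i)%nat -> agree i G H -> doneg G j <-> doneg H j.
Proof.
  intros Hji Ha. apply (agree_le _ j) in Ha; auto. unfold doneg. rewrite (E2_agree _ _ _ Ha).
  split; intros [H1 H2]; split; auto; intros l Hl.
  - rewrite <- (def_agree j G H l Hl Ha); auto.
  - rewrite (def_agree j G H l Hl Ha); auto.
Qed.

Lemma T_agree i G H : agree i G H -> Tg G i = Tg H i.
Proof.
  intros Ha. induction i; simpl. { apply E2_agree; auto. }
  rewrite IHi by (eapply agree_le; [|eauto]; lia). rewrite (E2_agree _ _ _ Ha). ring.
Qed.

Lemma T_nonneg G i : (forall j, (j <= i)%nat -> doneg G j) -> 0 <= Tg G i.
Proof.
  induction i; intros Hd; simpl.
  - apply (Hd O); lia.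
  - assert (0 <= E2 G (S i)) by (apply (Hd (S i)); lia).
    assert (0 <= Tg G i) by (apply IHi; intros; apply Hd; lia). lia.
Qed.

Lemma upd_val G k l k' l' : upd G k l k' l' =
  G k' l' + if (Nat.eqb k' k && Nat.eqb l' l && Nat.ltb k 15)%bool then 1 else 0.
Proof. reflexivity. Qed.

Lemma agree_upd_hi i G k l : (i < l)%nat -> agree i (upd G k l) G.
Proof.
  intros Hil. split.
  - rewrite upd_val. destruct (Nat.eqb_spec O l); [lia|]. rewrite ?Bool.andb_false_r, ?Bool.andb_false_l; ring.
  - intros j Hj k' Hk. rewrite upd_val. destruct (Nat.eqb_spec j l); [lia|].
    rewrite ?Bool.andb_false_r, ?Bool.andb_false_l; ring.
Qed.

Lemma agree_upd_k i G k l : (10 < k)%nat -> agree i (upd G k l) G.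
Proof.
  intros Hk. split.
  - rewrite upd_val. destruct (Nat.eqb_spec 10 k); [lia|]. simpl; ring.
  - intros j Hj k' Hk'. rewrite upd_val. destruct (Nat.eqb_spec k' k); [lia|]. simpl; ring.
Qed.

Lemma agree_refl i G : agree i G G.
Proof. split; auto. Qed.

Lemma Pre_upd i G k l : (l <= i)%nat -> k <> 10%nat -> k <> 12%nat -> Pre i G -> Pre i (upd G k l).
Proof.
  intros Hl H10 H12 [P1 [P2 P3]]. unfold Pre. rewrite !upd_val.
  destruct (Nat.eqb_spec 10 k); [lia|]. destruct (Nat.eqb_spec 12 k); [lia|]. simpl.
  split; [lia|]. split; [lia|]. intros l' k' Hl' Hk'. rewrite upd_val, P3 by lia.
  destruct (Nat.eqb_spec l' l); [lia|]. rewrite ?Bool.andb_false_r, ?Bool.andb_false_l; ring.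
Qed.

Lemma cont_upd_lvl G k l i : (k <= 8)%nat -> cont (upd G k l) i = cont G i.
Proof.
  intros Hk. induction i; simpl; rewrite !upd_val.
  - destruct (Nat.eqb_spec 10 k); [lia|]. simpl; ring.
  - rewrite IHi. destruct (Nat.eqb_spec 9 k); [lia|]. simpl; ring.
Qed.


Lemma def_upd G k i l : (k <= 8)%nat -> (l < 4)%nat ->
  def (upd G k i) i l = def G i l + cont G i * (if Nat.eqb (1 + l) k then 1 else 0)
                        - (if Nat.eqb (5 + l) k then 1 else 0).
Proof.
  intros Hk Hl. unfold def. rewrite cont_upd_lvl by auto. rewrite !upd_val.
  rewrite Nat.eqb_refl. destruct (Nat.ltb_spec k 15); [|lia].
  rewrite !Bool.andb_true_r. ring.
Qed.

Lemma E2_upd G k i : (k <= 8)%nat ->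
  E2 (upd G k i) i = E2 G i + cont G i * (if (Nat.leb 1 k && Nat.leb k 4)%bool then 1 else 0)
                        - (if Nat.eqb 0 k then 1 else 0).
Proof.
  intros Hk. unfold E2, Rg. rewrite cont_upd_lvl by auto. rewrite !upd_val.
  rewrite Nat.eqb_refl. destruct (Nat.ltb_spec k 15); [|lia].
  rewrite !Bool.andb_true_r.
  destruct k as [|[|[|[|[|k]]]]]; simpl; ring.
Qed.

Lemma agree_upd_lvl i G k l : (i < l)%nat -> agree i (upd G k l) G.
Proof. apply agree_upd_hi. Qed.

Lemma upd_15 G l : upd G 15 l = G.
Proof.
  extensionality k'. extensionality l'. rewrite upd_val.
  destruct (Nat.ltb_spec 15 15); [lia|]. rewrite Bool.andb_false_r. ring.
Qed.

Ltac src_is H :=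
  rewrite IS_st in H by lia; destruct H as [?Hin H]; simpl ISlev in H.
Ltac src_is' H := rewrite IS_st in H by lia; destruct H as [?Hin H].
Ltac tgt_is := rewrite IS_st by lia; split; [lia|]; simpl ISlev.

Lemma IS_step s G x0 x1 : In s specs -> IS (src s) G x0 x1 -> 0 <= x0 -> 0 <= x1 ->
  0 <= x0 + d0 s -> 0 <= x1 + d1 s ->
  IS (tgt s) (upd G (knd s) (lvl s)) (x0 + d0 s) (x1 + d1 s).
Proof.
  intros Hs HIS Hx0 Hx1 Hy0 Hy1.
  apply in_specs in Hs.
  destruct Hs as [E|[E|[E|[E|[E|[E|[[i [l [Hi [Hl [E|[E|E]]]]]]|[[i [Hi [E|E]]]|[i [Hi [E|[E|E]]]]]]]]]]]];
    subst s; cbn [src tgt knd lvl d0 d1] in *.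
  -
    destruct HIS as [HG [-> ->]]. tgt_is.
    assert (HG' : forall k l, upd G 10 0 k l = if (Nat.eqb k 10 && Nat.eqb l 0)%bool then 1 else 0).
    { intros k l. rewrite upd_val, HG. replace (Nat.ltb 10 15) with true by reflexivity.
      rewrite Bool.andb_true_r. destruct (Nat.eqb k 10 && Nat.eqb l 0)%bool; ring. }
    unfold ISrs, Pre. rewrite !HG'. simpl. split; [split; [reflexivity|split; [reflexivity|]]|].
    { intros l k Hl Hk. rewrite HG'. destruct (Nat.eqb_spec l 0); [lia|].
      rewrite Bool.andb_false_r; reflexivity. }
    assert (Hd : doneg (upd G 10 0) 0).
    { unfold doneg, def, E2, Rg. simpl. rewrite !HG'. simpl. split; [intros l Hl|].
      - destruct l as [|[|[|[|l]]]]; simpl; rewrite ?HG'; simpl; lia.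
      - lia. }
    split; [intros j Hj; replace j with O by lia; exact Hd|].
    simpl. unfold E2, Rg. simpl. rewrite !HG'. simpl. lia.
  -
    src_is HIS. tgt_is. destruct HIS as [HP [Hd [HT Hc]]].
    pose proof (agree_upd_k 0 G 11 0 ltac:(lia)) as Ha.
    split; [apply Pre_upd; auto|].
    split; [intros j Hj; rewrite (done_agree 0 j _ G) by auto; auto|].
    rewrite (T_agree 0 _ G Ha), (cont_agree 0 _ G Ha). lia.
  -
    src_is HIS. rewrite upd_15. destruct HIS as [[P1 [P2 P3]] [Hd [HT Hc]]].
    simpl. unfold ISfin. rewrite P2. split; auto. split; auto. lia.
  -
    destruct HIS as [H10 [Hd [HT Hc]]]. simpl. unfold ISfin.
    pose proof (agree_upd_k n G 12 0 ltac:(lia)) as Ha.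
    rewrite (T_agree n _ G Ha), (cont_agree n _ G Ha).
    rewrite !upd_val. simpl. split; [lia|]. split; [intros j Hj; rewrite (done_agree n j _ G) by auto; auto|].
    lia.
  - destruct HIS as [H10 [Hd [HT Hc]]]. simpl. unfold ISfin.
    pose proof (agree_upd_k n G 13 0 ltac:(lia)) as Ha.
    rewrite (T_agree n _ G Ha), (cont_agree n _ G Ha).
    rewrite !upd_val. simpl. split; [lia|]. split; [intros j Hj; rewrite (done_agree n j _ G) by auto; auto|].
    lia.
  - destruct HIS as [H10 [Hd [HT Hc]]]. simpl. unfold ISfin.
    pose proof (agree_upd_k n G 14 0 ltac:(lia)) as Ha.
    rewrite (T_agree n _ G Ha), (cont_agree n _ G Ha).
    rewrite !upd_val. simpl. split; [lia|]. split; [intros j Hj; rewrite (done_agree n j _ G) by auto; auto|].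
    lia.
  -
    src_is HIS. rewrite IS_st by lia. split; [lia|]. rewrite ISlev_h1 by auto.
    destruct HIS as [HP [Hd [HT Hc]]]. unfold ISh1.
    rewrite cont_upd_lvl by lia. rewrite (def_upd G (1 + l) i l) by lia. rewrite E2_upd by lia.
    rewrite Nat.eqb_refl. destruct (Nat.eqb_spec (5 + l) (1 + l)); [lia|].
    replace (Nat.leb 1 (1 + l) && Nat.leb (1 + l) 4)%bool with true
      by (symmetry; apply andb_true_intro; split; apply Nat.leb_le; lia).
    destruct (Nat.eqb_spec 0 (1 + l)); [lia|].
    assert (Hdi := Hd i (le_n i)). destruct Hdi as [Hdl HE].
    split; [apply Pre_upd; auto; lia|].
    split; [intros j Hj; rewrite (done_agree j j _ G) by (auto; apply agree_upd_hi; lia); apply Hd; lia|].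
    split; [|split; [|split]].
    + intros l' Hl' Hne. rewrite def_upd by lia.
      destruct (Nat.eqb_spec (1 + l') (1 + l)); [lia|]. destruct (Nat.eqb_spec (5 + l') (1 + l)); [lia|].
      specialize (Hdl l' Hl'). lia.
    + specialize (Hdl l Hl). lia.
    + lia.
    + lia.
  -
    src_is' HIS. { rewrite ISlev_h1 in HIS by auto.
    rewrite IS_st by lia. split; [lia|]. rewrite ISlev_h1 by auto.
    destruct HIS as [HP [Hd [Hl' [Hdl [HE Hc]]]]]. unfold ISh1.
    rewrite cont_upd_lvl by lia. rewrite (def_upd G (5 + l) i l) by lia. rewrite E2_upd by lia.
    rewrite Nat.eqb_refl. destruct (Nat.eqb_spec (1 + l) (5 + l)); [lia|].
    replace (Nat.leb 1 (5 + l) && Nat.leb (5 + l) 4)%bool with false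
      by (symmetry; apply Bool.andb_false_intro2; apply Nat.leb_gt; lia).
    destruct (Nat.eqb_spec 0 (5 + l)); [lia|].
    split; [apply Pre_upd; auto; lia|].
    split; [intros j Hj; rewrite (done_agree j j _ G) by (auto; apply agree_upd_hi; lia); apply Hd; lia|].
    split; [|split; [|split]].
    + intros l'' Hl'' Hne. rewrite def_upd by lia.
      destruct (Nat.eqb_spec (1 + l'') (5 + l)); [lia|]. destruct (Nat.eqb_spec (5 + l'') (5 + l)); [lia|].
      specialize (Hl' l'' Hl'' Hne). lia.
    + lia.
    + lia.
    + lia. }
  -
    src_is' HIS. rewrite ISlev_h1 in HIS by auto. rewrite upd_15. tgt_is.
    destruct HIS as [HP [Hd [Hl' [Hdl [HE Hc]]]]]. unfold ISh2.
    split; auto. split; auto. split; [|split; lia].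
    intros l'' Hl''. destruct (Nat.eq_dec l'' l); [subst; lia|]. auto.
  -
    src_is HIS. tgt_is. destruct HIS as [HP [Hd [Hdl [HE Hc]]]]. unfold ISh2.
    rewrite cont_upd_lvl by lia. rewrite E2_upd by lia. simpl.
    split; [apply Pre_upd; auto; lia|].
    split; [intros j Hj; rewrite (done_agree j j _ G) by (auto; apply agree_upd_hi; lia); apply Hd; lia|].
    split; [|lia].
    intros l Hl. rewrite def_upd by lia.
    destruct (Nat.eqb_spec (1 + l) 0); [lia|]. destruct (Nat.eqb_spec (5 + l) 0); [lia|].
    specialize (Hdl l Hl). lia.
  -
    src_is HIS. rewrite upd_15. tgt_is. destruct HIS as [HP [Hd [Hdl [HE Hc]]]]. unfold ISrs.
    assert (Hdi : doneg G i) by (split; auto; lia).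
    split; auto. split; [intros j Hj; destruct (Nat.eq_dec j i); [subst; auto|apply Hd; lia]|].
    split; [|lia].
    destruct i as [|i']; simpl; [lia|].
    assert (0 <= Tg G i') by (apply T_nonneg; intros; apply Hd; lia). lia.
  -
    src_is HIS. rewrite upd_15. tgt_is. destruct HIS as [[P1 [P2 P3]] [Hd [HT Hc]]]. unfold ISfill.
    split; [lia|]. split; [split; auto; split; auto; intros; apply P3; lia|].
    split; [intros; apply P3; lia|].
    split; [intros; apply Hd; lia|].
    destruct i as [|i']; [lia|]. replace (S i' - 1)%nat with i' in * by lia.
    split; [lia|]. simpl.
    rewrite (P3 (S i') 9%nat) by lia. lia.
  -
    src_is HIS. tgt_is. destruct HIS as [Hi1 [HP [HZ [Hd [HT Hc]]]]]. unfold ISfill.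
    destruct i as [|i']; [lia|]. replace (S i' - 1)%nat with i' in * by lia.
    pose proof (agree_upd_hi i' G 9 (S i') ltac:(lia)) as Ha.
    split; [lia|]. split; [apply Pre_upd; auto; lia|].
    split; [intros k Hk; rewrite upd_val, HZ by auto; destruct (Nat.eqb_spec k 9); [lia|]; simpl; ring|].
    split; [intros j Hj; rewrite (done_agree i' j _ G) by (auto; lia); apply Hd; lia|].
    split; [rewrite (T_agree i' _ G Ha); lia|].
    simpl. rewrite (cont_agree i' _ G Ha). rewrite upd_val. rewrite !Nat.eqb_refl. simpl. simpl in Hc. lia.
  -
    src_is HIS. rewrite upd_15. tgt_is. destruct HIS as [Hi1 [HP [HZ [Hd [HT Hc]]]]]. unfold ISrs.
    assert (Hdi : doneg G i).
    { unfold doneg, def, E2, Rg. rewrite !HZ by lia. split; [intros l Hl; rewrite !HZ by lia; lia|lia]. }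
    split; auto. split; [intros j Hj; destruct (Nat.eq_dec j i); [subst; auto|apply Hd; lia]|].
    split; [|lia].
    destruct i as [|i']; [lia|]. simpl. replace (S i' - 1)%nat with i' in * by lia.
    unfold E2, Rg. rewrite !HZ by lia. lia.
Qed.


Lemma ident G l : 2 * cont G l * Rg G l - Sg G l =
  def G l 0 + def G l 1 + def G l 2 + def G l 3 + E2 G l.
Proof. unfold def, E2, Rg, Sg. cbn [Nat.add]. ring. Qed.

Lemma full_from G l : doneg G l -> Sg G l = 2 * cont G l * Rg G l ->
  (forall m, (m < 4)%nat -> def G l m = 0) /\ E2 G l = 0.
Proof.
  intros [Hd HE] HS. pose proof (ident G l) as Hi.
  pose proof (Hd 0%nat ltac:(lia)). pose proof (Hd 1%nat ltac:(lia)).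
  pose proof (Hd 2%nat ltac:(lia)). pose proof (Hd 3%nat ltac:(lia)).
  split; [|lia]. intros m Hm. destruct m as [|[|[|[|m]]]]; lia.
Qed.

Lemma derive G : G 10%nat O = 1 -> (forall j, (j <= n)%nat -> doneg G j) ->
  (forall l m, (l <= n)%nat -> (m < 7)%nat -> cnt G l m = 0) ->
  forall l, (l <= n)%nat -> cont G l = Z.of_nat (A ^ (2 ^ l)) /\
    (forall m, (m < 4)%nat -> def G l m = 0) /\ E2 G l = 0 /\ ((l < n)%nat -> G 3%nat l = cont G l).
Proof.
  intros H10 Hd Hc. induction l as [|l' IH]; intros Hl.
  - pose proof (Hc 0%nat 0%nat Hl ltac:(lia)) as C0. pose proof (Hc 0%nat 2%nat Hl ltac:(lia)) as C2.
    pose proof (Hc 0%nat 3%nat Hl ltac:(lia)) as C3.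
    cbn [cnt prevK prevQ prevH] in C0, C2, C3.
    assert (Hc0 : cont G 0 = Az) by (simpl; rewrite H10; ring).
    assert (HS : Sg G 0 = 2 * cont G 0 * Rg G 0) by (rewrite Hc0; rewrite H10 in *; nia).
    destruct (full_from G 0 (Hd 0%nat Hl) HS) as [Hdf HE].
    split; [rewrite Hc0; unfold Az; simpl; rewrite Nat.mul_1_r; reflexivity|].
    split; auto. split; auto. intros Hn. unfold isn in C3.
    destruct (Nat.eqb_spec 0 n); [lia|]. rewrite Hc0. rewrite H10 in C3. lia.
  - destruct IH as [IHc [IHd [IHE IHh]]]; [lia|].
    specialize (IHh ltac:(lia)).
    pose proof (Hc (S l') 0%nat Hl ltac:(lia)) as C0. pose proof (Hc (S l') 1%nat Hl ltac:(lia)) as C1.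
    pose proof (Hc (S l') 2%nat Hl ltac:(lia)) as C2. pose proof (Hc (S l') 3%nat Hl ltac:(lia)) as C3.
    pose proof (Hc (S l') 4%nat Hl ltac:(lia)) as C4.
    cbn [cnt prevK prevQ prevH] in C0, C1, C2, C3, C4.
    pose proof (IHd 0%nat ltac:(lia)) as D0. pose proof (IHd 1%nat ltac:(lia)) as D1.
    pose proof (IHd 2%nat ltac:(lia)) as D2.
    unfold def in D0, D1, D2. cbn [Nat.add] in D0, D1, D2.
    set (c := cont G l') in *.
    assert (H9 : G 9%nat (S l') = c * c - c) by (rewrite IHh in *; nia).
    assert (Hcs : cont G (S l') = c * c) by (simpl; fold c; lia).
    assert (HS : Sg G (S l') = 2 * cont G (S l') * Rg G (S l')).
    { rewrite Hcs. assert (G 6%nat l' = c * G 2%nat l') by lia.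
      assert (G 5%nat l' = c * G 1%nat l') by lia. nia. }
    destruct (full_from G (S l') (Hd (S l') Hl) HS) as [Hdf HE].
    split.
    { rewrite Hcs, IHc. rewrite Nat.pow_succ_r', Nat.mul_comm, Nat.pow_mul_r, Nat.pow_2_r, Nat2Z.inj_mul.
      reflexivity. }
    split; auto. split; auto. intros Hn. unfold isn in C3.
    destruct (Nat.eqb_spec (S l') n); [lia|]. rewrite Hcs. lia.
Qed.


Lemma vadd_length u v : length (vadd u v) = Nat.min (length u) (length v).
Proof. unfold vadd. rewrite length_map, length_combine. reflexivity. Qed.

Lemma vadd_nth u v j : length u = length v -> (j < length u)%nat ->
  nth j (vadd u v) 0 = nth j u 0 + nth j v 0.
Proof.
  revert v j. induction u as [|a u IH]; intros [|b v] j Hl Hj; simpl in *; try lia.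
  destruct j; [reflexivity|]. apply IH; lia.
Qed.

Lemma mkvec_length f : length (mkvec f) = NN.
Proof. unfold mkvec. rewrite length_map, length_seq. reflexivity. Qed.

Lemma mkvec_nth f j : (j < NN)%nat -> nth j (mkvec f) 0 = f j.
Proof.
  intros Hj. unfold mkvec. rewrite nth_indep with (d' := f 0%nat) by (rewrite length_map, length_seq; auto).
  rewrite map_nth, seq_nth by auto. reflexivity.
Qed.

Definition Inv (c : nat * list Z) : Prop :=
  length (snd c) = NN /\ exists G, (forall j, (2 <= j < NN)%nat -> nth j (snd c) 0 = Fvec G j) /\
    0 <= nth 0 (snd c) 0 /\ 0 <= nth 1 (snd c) 0 /\ IS (fst c) G (nth 0 (snd c) 0) (nth 1 (snd c) 0).

Lemma NN_ge : (18 <= NN)%nat.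
Proof. unfold NN. lia. Qed.

Lemma Inv_step c c' : Inv c -> step 2 VV c c' -> Inv c'.
Proof.
  destruct c as [q u], c' as [q' u']. simpl.
  intros [Hlen [G [HF [H0 [H1 HI]]]]] [v [Hin [Hu Hnn]]]. cbn [fst snd] in *.
  unfold VV in Hin; cbn [trans] in Hin. apply in_map_iff in Hin. destruct Hin as [s [Hs Hins]].
  unfold mkT in Hs. injection Hs as Eq Ev Eq'. subst q q' v.
  assert (Hlu : length u' = NN) by (rewrite Hu, vadd_length, mkvec_length, Hlen; lia).
  assert (Hn : forall j, (j < NN)%nat -> nth j u' 0 = nth j u 0 + tvec s j).
  { intros j Hj. rewrite Hu, vadd_nth by (rewrite ?mkvec_length; lia). rewrite mkvec_nth by auto. reflexivity. }
  pose proof NN_ge.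
  assert (E0 : nth 0 u' 0 = nth 0 u 0 + d0 s) by (rewrite Hn by lia; reflexivity).
  assert (E1 : nth 1 u' 0 = nth 1 u 0 + d1 s) by (rewrite Hn by lia; reflexivity).
  pose proof (Hnn 0%nat ltac:(lia)) as N0. pose proof (Hnn 1%nat ltac:(lia)) as N1. cbn [snd] in N0, N1.
  split; auto. exists (upd G (knd s) (lvl s)).
  cbn [fst snd]. split; [|split; [lia|split; [lia|]]].
  - intros j Hj. rewrite Hn by lia. rewrite Fvec_upd, HF by lia. unfold tvec.
    destruct (Nat.eqb_spec j 0); [lia|]. destruct (Nat.eqb_spec j 1); [lia|]. reflexivity.
  - rewrite E0, E1. apply IS_step; auto; lia.
Qed.

Lemma Inv_reach c c' : reach 2 VV c c' -> Inv c -> Inv c'.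
Proof.
  intros H. induction H; auto. intros; eapply Inv_step; eauto.
Qed.

Lemma Inv_init : Inv (0%nat, zeros NN).
Proof.
  unfold zeros. split; [cbn [snd]; apply repeat_length|]. exists zerog. cbn [fst snd].
  split; [intros j Hj; rewrite nth_repeat, Fvec_zero; reflexivity|].
  rewrite !nth_repeat. split; [lia|]. split; [lia|]. unfold ISq0. split; auto.
Qed.

Lemma Inv_final v : length v = 3%nat -> Inv (1%nat, v ++ zeros (NN - 3)) ->
  target_set (Z.of_nat (A ^ (2 ^ n))) v.
Proof.
  intros Hv [Hlen [G [HF [H0 [H1 HI]]]]]. simpl in *.
  destruct v as [|a [|b [|c [|? ?]]]]; simpl in Hv; try lia. simpl in H0, H1.
  destruct HI as [H10 [Hd [HT Hc]]]. cbn [fst snd nth app] in HT, Hc.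
  pose proof NN_ge.
  assert (Hz : forall l m, (l <= n)%nat -> (m < 7)%nat -> cnt G l m = 0).
  { intros l m Hl Hm. rewrite <- Fvec_code by auto. rewrite <- HF by (unfold NN; lia).
    simpl. destruct (4 + 7 * l + m)%nat as [|[|[|[|j]]]] eqn:E; try lia.
    simpl. unfold zeros. apply nth_repeat. }
  assert (Hcz : c = G 13%nat O).
  { change (G 13%nat O) with (Fvec G 2). rewrite <- (HF 2%nat) by lia. reflexivity. }
  pose proof (derive G H10 Hd Hz n (le_n n)) as [Hcn [Hdn [HEn _]]].
  assert (HT0 : forall i, (i <= n)%nat -> Tg G i = 0).
  { induction i; intros Hi; simpl.
    - destruct (derive G H10 Hd Hz 0 ltac:(lia)) as [_ [_ [E _]]]. auto.
    - rewrite IHi by lia. destruct (derive G H10 Hd Hz (S i) Hi) as [_ [_ [E _]]]. lia. }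
  rewrite HT0 in HT by auto.
  pose proof (Hz n 5%nat (le_n n) ltac:(lia)) as C5. pose proof (Hz n 6%nat (le_n n) ltac:(lia)) as C6.
  cbn [cnt] in C5, C6. unfold isn in C5, C6. rewrite Nat.eqb_refl in C5, C6.
  pose proof (Hdn 3%nat ltac:(lia)) as D3. unfold def in D3. cbn [Nat.add] in D3.
  exists (Z.to_nat b). rewrite Z2Nat.id by lia.
  assert (b = G 12%nat O) by lia. rewrite <- Hcn.
  f_equal; [lia|]. f_equal. f_equal. rewrite Hcz. nia.
Qed.


Definition cfgv G x0 x1 : list Z :=
  mkvec (fun j => if Nat.eqb j 0 then x0 else if Nat.eqb j 1 then x1 else Fvec G j).
Definition cfg q G x0 x1 : nat * list Z := (q, cfgv G x0 x1).

Lemma vadd_map (f g : nat -> Z) l : vadd (map f l) (map g l) = map (fun j => f j + g j) l.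
Proof. induction l; simpl; auto. unfold vadd in *. simpl. f_equal. auto. Qed.

Lemma fire s G x0 x1 : In s specs -> 0 <= x0 + d0 s -> 0 <= x1 + d1 s ->
  step 2 VV (cfg (src s) G x0 x1) (cfg (tgt s) (upd G (knd s) (lvl s)) (x0 + d0 s) (x1 + d1 s)).
Proof.
  intros Hs H0 H1. exists (mkvec (tvec s)). unfold cfg. cbn [fst snd]. split; [|split].
  - unfold VV. cbn [trans]. apply in_map_iff. exists s. split; auto.
  - unfold cfgv, mkvec. rewrite vadd_map. apply map_ext. intros j. unfold tvec.
    destruct (Nat.eqb j 0); auto. destruct (Nat.eqb j 1); auto. rewrite Fvec_upd. reflexivity.
  - intros i Hi. pose proof NN_ge. unfold cfgv. rewrite mkvec_nth by lia.
    destruct i as [|[|i]]; simpl; lia.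
Qed.

Definition gadd (G : ghost) k l (t : nat) : ghost :=
  fun k' l' => G k' l' + if (Nat.eqb k' k && Nat.eqb l' l)%bool then Z.of_nat t else 0.

Lemma gadd_S G k l t : (k < 15)%nat -> upd (gadd G k l t) k l = gadd G k l (S t).
Proof.
  intros Hk. extensionality k'. extensionality l'. unfold upd, gplus, unitg, gadd.
  destruct (Nat.ltb_spec k 15); [|lia]. rewrite Bool.andb_true_r.
  destruct (Nat.eqb k' k && Nat.eqb l' l)%bool; lia.
Qed.

Lemma gadd_0 G k l : gadd G k l 0 = G.
Proof.
  extensionality k'. extensionality l'. unfold gadd. destruct (_ && _)%bool; lia.
Qed.

Lemma loop s G x0 x1 t : In s specs -> src s = tgt s -> (knd s < 15)%nat ->
  (forall m, (m <= t)%nat -> 0 <= x0 + Z.of_nat m * d0 s /\ 0 <= x1 + Z.of_nat m * d1 s) ->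
  reach 2 VV (cfg (src s) G x0 x1)
    (cfg (src s) (gadd G (knd s) (lvl s) t) (x0 + Z.of_nat t * d0 s) (x1 + Z.of_nat t * d1 s)).
Proof.
  intros Hs Heq Hk. induction t as [|t IH]; intros Hm.
  - rewrite gadd_0. replace (x0 + Z.of_nat 0 * d0 s) with x0 by lia.
    replace (x1 + Z.of_nat 0 * d1 s) with x1 by lia. apply rt_refl.
  - eapply rt_trans; [apply IH; intros; apply Hm; lia|].
    apply rt_step. rewrite <- gadd_S by auto.
    replace (x0 + Z.of_nat (S t) * d0 s) with ((x0 + Z.of_nat t * d0 s) + d0 s) by lia.
    replace (x1 + Z.of_nat (S t) * d1 s) with ((x1 + Z.of_nat t * d1 s) + d1 s) by lia.
    pattern (src s) at 2. rewrite Heq. apply fire; auto.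
    + destruct (Hm (S t) (le_n _)). lia.
    + destruct (Hm (S t) (le_n _)). lia.
Qed.

Lemma fire1 s G x0 x1 : In s specs -> (knd s < 15)%nat -> 0 <= x0 + d0 s -> 0 <= x1 + d1 s ->
  reach 2 VV (cfg (src s) G x0 x1) (cfg (tgt s) (gadd G (knd s) (lvl s) 1) (x0 + d0 s) (x1 + d1 s)).
Proof.
  intros. apply rt_step. rewrite <- gadd_S, gadd_0 by auto. apply fire; auto.
Qed.

Lemma fire0 s G x0 x1 : In s specs -> knd s = 15%nat -> 0 <= x0 + d0 s -> 0 <= x1 + d1 s ->
  reach 2 VV (cfg (src s) G x0 x1) (cfg (tgt s) G (x0 + d0 s) (x1 + d1 s)).
Proof.
  intros Hs Hk H0 H1. apply rt_step. pose proof (fire s G x0 x1 Hs H0 H1). rewrite Hk, upd_15 in H. auto.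
Qed.


Definition cn (l : nat) : nat := (A ^ (2 ^ l))%nat.

Lemma cn_S l : cn (S l) = (cn l * cn l)%nat.
Proof. unfold cn. rewrite Nat.pow_succ_r', Nat.mul_comm, Nat.pow_mul_r, Nat.pow_2_r. reflexivity. Qed.

Lemma cn_0 : cn 0 = A.
Proof. unfold cn. simpl. lia. Qed.

Lemma cn_mono l : (cn l <= cn (S l))%nat.
Proof. rewrite cn_S. destruct (cn l); lia. Qed.

Variable C : nat.

Fixpoint Rd (d : nat) : nat :=
  match d with O => C | S d' => (Rd d' + cn (n - S d') * Rd d' + cn (n - S d'))%nat end.
Definition Rl (l : nat) : nat := Rd (n - l).

Definition mr (q l : nat) : nat :=
  if Nat.ltb l n then match q with O => Rl (S l) | 1%nat => (cn l * Rl (S l))%nat | 2%nat => cn l | _ => O end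
  else if Nat.eqb l n then (if Nat.eqb q 3 then C else O) else O.

Lemma Rl_sum l : (l <= n)%nat -> Rl l = (mr 0 l + mr 1 l + mr 2 l + mr 3 l)%nat.
Proof.
  intros Hl. unfold mr. destruct (Nat.ltb_spec l n).
  - unfold Rl. replace (n - l)%nat with (S (n - S l)) by lia. simpl.
    replace (n - S (n - S l))%nat with l by lia. lia.
  - replace l with n by lia. rewrite Nat.eqb_refl. simpl. unfold Rl. rewrite Nat.sub_diag. reflexivity.
Qed.

Definition fln (l : nat) : nat := if (Nat.leb 1 l && Nat.leb l n)%bool then (cn l - cn (l - 1))%nat else O.

Definition Gf (k l : nat) : Z := Z.of_nat (match k with
  | O => if Nat.leb l n then cn l * Rl l else 0
  | 1 => mr 0 l | 2 => mr 1 l | 3 => mr 2 l | 4 => mr 3 l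
  | 5 => cn l * mr 0 l | 6 => cn l * mr 1 l | 7 => cn l * mr 2 l | 8 => cn l * mr 3 l
  | 9 => fln l
  | 10 => if Nat.eqb l 0 then 1 else 0
  | 11 => if Nat.eqb l 0 then Rl 0 else 0
  | 12 => if Nat.eqb l 0 then C else 0
  | 13 => if Nat.eqb l 0 then C * cn n else 0
  | 14 => if Nat.eqb l 0 then cn n else 0
  | _ => 0 end)%nat.


Lemma mr_lt l : (l < n)%nat -> mr 0 l = Rl (S l) /\ mr 1 l = (cn l * Rl (S l))%nat /\ mr 2 l = cn l /\ mr 3 l = O.
Proof. intros H. unfold mr. destruct (Nat.ltb_spec l n); [|lia]. auto. Qed.
Lemma mr_n : mr 0 n = O /\ mr 1 n = O /\ mr 2 n = O /\ mr 3 n = C.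
Proof. unfold mr. destruct (Nat.ltb_spec n n); [lia|]. rewrite Nat.eqb_refl. auto. Qed.
Lemma mr_gt l q : (n < l)%nat -> mr q l = O.
Proof. intros H. unfold mr. destruct (Nat.ltb_spec l n); [lia|]. destruct (Nat.eqb_spec l n); [lia|]. auto. Qed.

Lemma F1 l : Gf 1 l = Z.of_nat (mr 0 l). Proof. reflexivity. Qed.
Lemma F5 l : Gf 5 l = Z.of_nat (cn l) * Z.of_nat (mr 0 l). Proof. unfold Gf. lia. Qed.
Lemma F2 l : Gf 2 l = Z.of_nat (mr 1 l). Proof. reflexivity. Qed.
Lemma F6 l : Gf 6 l = Z.of_nat (cn l) * Z.of_nat (mr 1 l). Proof. unfold Gf. lia. Qed.
Lemma F3 l : Gf 3 l = Z.of_nat (mr 2 l). Proof. reflexivity. Qed.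
Lemma F7 l : Gf 7 l = Z.of_nat (cn l) * Z.of_nat (mr 2 l). Proof. unfold Gf. lia. Qed.
Lemma F4 l : Gf 4 l = Z.of_nat (mr 3 l). Proof. reflexivity. Qed.
Lemma F8 l : Gf 8 l = Z.of_nat (cn l) * Z.of_nat (mr 3 l). Proof. unfold Gf. lia. Qed.
Lemma F0a l : (l <= n)%nat -> Gf 0 l = Z.of_nat (cn l) * Z.of_nat (Rl l).
Proof. intros H. unfold Gf. destruct (Nat.leb_spec l n); lia. Qed.
Lemma F0b l : (n < l)%nat -> Gf 0 l = 0.
Proof. intros H. unfold Gf. destruct (Nat.leb_spec l n); lia. Qed.
Lemma F9a l : (1 <= l <= n)%nat -> Gf 9 l = Z.of_nat (cn l) - Z.of_nat (cn (l - 1)).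
Proof.
  intros H. unfold Gf, fln. destruct (Nat.leb_spec 1 l); [|lia]. destruct (Nat.leb_spec l n); [|lia].
  simpl. destruct l as [|l]; [lia|]. pose proof (cn_mono l). replace (S l - 1)%nat with l by lia. lia.
Qed.
Lemma F9b l : (n < l)%nat -> Gf 9 l = 0.
Proof. intros H. unfold Gf, fln. destruct (Nat.leb_spec l n); [lia|]. rewrite Bool.andb_false_r. reflexivity. Qed.
Lemma F10 : Gf 10 0 = 1. Proof. reflexivity. Qed.
Lemma F11 : Gf 11 0 = Z.of_nat (Rl 0). Proof. reflexivity. Qed.
Lemma F12 : Gf 12 0 = Z.of_nat C. Proof. reflexivity. Qed.
Lemma F13 : Gf 13 0 = Z.of_nat C * Z.of_nat (cn n). Proof. unfold Gf. simpl. lia. Qed.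
Lemma F14 : Gf 14 0 = Z.of_nat (cn n). Proof. reflexivity. Qed.

Ltac Frw := rewrite ?F1, ?F2, ?F3, ?F4, ?F5, ?F6, ?F7, ?F8, ?F10, ?F11, ?F12, ?F13, ?F14.

Lemma Gf_cnt l m : (l <= S n)%nat -> (m < 7)%nat -> cnt Gf l m = 0.
Proof.
  intros Hl Hm. pose proof (cn_S) as CS. pose proof cn_0 as C0.
  destruct l as [|l'].
  - pose proof (Rl_sum 0 ltac:(lia)) as R0.
    unfold cnt, Rg, Sg, prevK, prevQ, prevH, isn. Frw. rewrite F0a by lia. unfold Az.
    destruct (Nat.eqb_spec 0 n) as [Hn|Hn].
    + pose proof mr_n as [M0 [M1 [M2 M3]]]. rewrite <- Hn in M0, M1, M2, M3.
      rewrite M0, M1, M2, M3 in *.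
      destruct m as [|[|[|[|[|[|[|m]]]]]]]; try lia. all: rewrite <- Hn, C0; nia.
    + pose proof (mr_lt 0 ltac:(lia)) as [M0 [M1 [M2 M3]]].
      rewrite M3 in *.
      destruct m as [|[|[|[|[|[|[|m]]]]]]]; try lia.
  - unfold cnt, Rg, Sg, prevK, prevQ, prevH, isn. Frw.
    destruct (Nat.lt_ge_cases l' n) as [Hlt|Hge].
    + pose proof (mr_lt l' Hlt) as [M0 [M1 [M2 M3]]].
      pose proof (Rl_sum (S l') ltac:(lia)) as RS.
      rewrite F0a, F9a by lia. replace (S l' - 1)%nat with l' by lia.
      destruct (Nat.eqb_spec (S l') n) as [Hn|Hn].
      * pose proof mr_n as [N0 [N1 [N2 N3]]]. rewrite <- Hn in N0, N1, N2, N3.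
        rewrite M0, M1, M2, N0, N1, N2, N3 in *. rewrite CS in *.
        destruct m as [|[|[|[|[|[|[|m]]]]]]]; try lia.
        all: rewrite <- Hn, CS; nia.
      * pose proof (mr_lt (S l') ltac:(lia)) as [N0 [N1 [N2 N3]]].
        rewrite M0, M1, M2, N2, N3 in *. rewrite CS in *.
        destruct m as [|[|[|[|[|[|[|m]]]]]]]; try lia.

    + assert (l' = n) by lia. subst l'.
      pose proof mr_n as [M0 [M1 [M2 M3]]].
      rewrite F0b, F9b by lia. rewrite ?M0, ?M1, ?M2, ?M3.
      rewrite !(mr_gt (S n)) by lia.
      destruct (Nat.eqb_spec (S n) n); [lia|].
      destruct m as [|[|[|[|[|[|[|m]]]]]]]; try lia.
Qed.


Lemma fire1' s G G' x0 x1 y0 y1 : In s specs -> (knd s < 15)%nat -> y0 = x0 + d0 s -> y1 = x1 + d1 s ->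
  0 <= y0 -> 0 <= y1 -> G' = gadd G (knd s) (lvl s) 1 ->
  reach 2 VV (cfg (src s) G x0 x1) (cfg (tgt s) G' y0 y1).
Proof. intros; subst. apply fire1; auto. Qed.

Lemma fire0' s G x0 x1 y0 y1 : In s specs -> knd s = 15%nat -> y0 = x0 + d0 s -> y1 = x1 + d1 s ->
  0 <= y0 -> 0 <= y1 -> reach 2 VV (cfg (src s) G x0 x1) (cfg (tgt s) G y0 y1).
Proof. intros; subst. apply fire0; auto. Qed.

Lemma loop' s G G' x0 x1 y0 y1 t : In s specs -> src s = tgt s -> (knd s < 15)%nat ->
  (forall m, (m <= t)%nat -> 0 <= x0 + Z.of_nat m * d0 s /\ 0 <= x1 + Z.of_nat m * d1 s) ->
  y0 = x0 + Z.of_nat t * d0 s -> y1 = x1 + Z.of_nat t * d1 s -> G' = gadd G (knd s) (lvl s) t ->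
  reach 2 VV (cfg (src s) G x0 x1) (cfg (src s) G' y0 y1).
Proof. intros; subst. apply loop; auto. Qed.

Lemma in_lev i s : (i <= n)%nat -> In s (lev i) -> In s specs.
Proof.
  intros Hi Hs. unfold specs. apply in_app_iff. right. apply in_app_iff. left.
  apply in_flat_map. exists i. split; auto. apply in_seq. lia.
Qed.

Lemma in_fil i s : (1 <= i <= n)%nat -> In s (fil i) -> In s specs.
Proof.
  intros Hi Hs. unfold specs. apply in_app_iff. right. apply in_app_iff. right.
  apply in_flat_map. exists i. split; auto. apply in_seq. lia.
Qed.

Lemma in_glob s : In s glob -> In s specs.
Proof. intros Hs. unfold specs. apply in_app_iff. left. auto. Qed.

Lemma lev_in_h i q : (q < 4)%nat ->
  In (mkS (st i 0) (1 + q) i 0 0 (st i (1 + q))) (lev i) /\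
  In (mkS (st i (1 + q)) (5 + q) i (-1) 1 (st i (1 + q))) (lev i) /\
  In (mkS (st i (1 + q)) 15 0 0 0 (st i 5)) (lev i) /\
  In (mkS (st i 5) 0 i 1 (-1) (st i 5)) (lev i) /\
  In (mkS (st i 5) 15 0 0 0 (st i 0)) (lev i).
Proof.
  intros Hq. destruct q as [|[|[|[|q]]]]; try lia; unfold lev; simpl;
  repeat split; repeat (first [left; reflexivity | right]).
Qed.

Definition addR (G : ghost) i q c m :=
  gadd (gadd (gadd G (1 + q) i m) (5 + q) i (m * c)) 0 i (m * c).

Lemma addR_S G i q c m : addR G i q c (S m) = addR (addR G i q c m) i q c 1.
Proof.
  extensionality k'. extensionality l'. unfold addR, gadd.
  destruct (Nat.eqb k' (1 + q) && Nat.eqb l' i)%bool;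
  destruct (Nat.eqb k' (5 + q) && Nat.eqb l' i)%bool;
  destruct (Nat.eqb k' 0 && Nat.eqb l' i)%bool; lia.
Qed.

Lemma round1 G i q : (i <= n)%nat -> (q < 4)%nat ->
  reach 2 VV (cfg (st i 0) G (Z.of_nat (cn i)) 0) (cfg (st i 0) (addR G i q (cn i) 1) (Z.of_nat (cn i)) 0).
Proof.
  intros Hi Hq. destruct (lev_in_h i q Hq) as [I1 [I2 [I3 [I4 I5]]]].
  unfold addR. rewrite Nat.mul_1_l. set (c := cn i).
  eapply rt_trans.
  { eapply (fire1' (mkS (st i 0) (1 + q) i 0 0 (st i (1 + q)))); [eapply in_lev; eauto|simpl; lia| | | | |reflexivity];
    simpl; reflexivity || lia. }
  eapply rt_trans.
  { eapply (loop' (mkS (st i (1 + q)) (5 + q) i (-1) 1 (st i (1 + q))) _ _ _ _ _ _ c);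
    [eapply in_lev; eauto|reflexivity|simpl; lia| | | |reflexivity]; simpl.
    - intros m Hm. lia.
    - reflexivity.
    - reflexivity. }
  eapply rt_trans.
  { eapply (fire0' (mkS (st i (1 + q)) 15 0 0 0 (st i 5))); [eapply in_lev; eauto|reflexivity| | | |];
    simpl; try reflexivity; lia. }
  eapply rt_trans.
  { eapply (loop' (mkS (st i 5) 0 i 1 (-1) (st i 5)) _ _ _ _ _ _ c);
    [eapply in_lev; eauto|reflexivity|simpl; lia| | | |reflexivity]; simpl.
    - intros m Hm. lia.
    - reflexivity.
    - reflexivity. }
  eapply (fire0' (mkS (st i 5) 15 0 0 0 (st i 0))); [eapply in_lev; eauto|reflexivity| | | |];
    simpl; try lia.
Qed.

Lemma rounds G i q m : (i <= n)%nat -> (q < 4)%nat ->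
  reach 2 VV (cfg (st i 0) G (Z.of_nat (cn i)) 0) (cfg (st i 0) (addR G i q (cn i) m) (Z.of_nat (cn i)) 0).
Proof.
  intros Hi Hq. induction m as [|m IH].
  - unfold addR. simpl. rewrite !gadd_0. apply rt_refl.
  - eapply rt_trans; [apply IH|]. rewrite addR_S. apply round1; auto.
Qed.


Definition Gup (i : nat) : ghost := fun k l =>
  if Nat.leb k 9 then (if Nat.ltb l i then Gf k l else 0)
  else if (Nat.eqb k 10 || Nat.eqb k 11)%bool then Gf k l else 0.

Lemma Gup_level i : (i <= n)%nat ->
  addR (addR (addR (addR (gadd (Gup i) 9 i (fln i)) i 0 (cn i) (mr 0 i)) i 1 (cn i) (mr 1 i))
     i 2 (cn i) (mr 2 i)) i 3 (cn i) (mr 3 i) = Gup (S i).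
Proof.
  intros Hi. extensionality k. extensionality l. unfold Gup, addR, gadd.
  destruct (Nat.eqb_spec l i) as [->|Hne].
  - rewrite ?Nat.eqb_refl. destruct (Nat.ltb_spec i i); [lia|]. destruct (Nat.ltb_spec i (S i)); [|lia].
    rewrite !Bool.andb_true_r.
    pose proof (Rl_sum i Hi) as RS.
    destruct k as [|[|[|[|[|[|[|[|[|[|k]]]]]]]]]]; simpl Nat.eqb; simpl Nat.leb; cbv iota beta.
    + rewrite F0a by auto. rewrite RS. lia.
    + rewrite F1. lia.
    + rewrite F2. lia.
    + rewrite F3. lia.
    + rewrite F4. lia.
    + rewrite F5. lia.
    + rewrite F6. lia.
    + rewrite F7. lia.
    + rewrite F8. lia.
    + unfold Gf. lia.
    + destruct (_ || _)%bool; lia.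
  - rewrite ?Bool.andb_false_r.
    destruct (Nat.leb k 9); [|destruct (_ || _)%bool; lia].
    destruct (Nat.ltb_spec l i); destruct (Nat.ltb_spec l (S i)); lia.
Qed.

Lemma level i : (i <= n)%nat ->
  reach 2 VV (cfg (st i 0) (gadd (Gup i) 9 i (fln i)) (Z.of_nat (cn i)) 0)
             (cfg (st i 0) (Gup (S i)) (Z.of_nat (cn i)) 0).
Proof.
  intros Hi. rewrite <- Gup_level by auto.
  eapply rt_trans; [apply (rounds _ i 0 (mr 0 i)); auto; lia|].
  eapply rt_trans; [apply (rounds _ i 1 (mr 1 i)); auto; lia|].
  eapply rt_trans; [apply (rounds _ i 2 (mr 2 i)); auto; lia|].
  apply (rounds _ i 3 (mr 3 i)); auto; lia.
Qed.


Lemma trans_fill i : (i < n)%nat ->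
  reach 2 VV (cfg (st i 0) (Gup (S i)) (Z.of_nat (cn i)) 0)
    (cfg (st (S i) 0) (gadd (Gup (S i)) 9 (S i) (fln (S i))) (Z.of_nat (cn (S i))) 0).
Proof.
  intros Hi.
  assert (Hf : fln (S i) = (cn (S i) - cn i)%nat).
  { unfold fln. destruct (Nat.leb_spec 1 (S i)); [|lia]. destruct (Nat.leb_spec (S i) n); [|lia].
    simpl. rewrite Nat.sub_0_r. reflexivity. }
  pose proof (cn_mono i).
  assert (I1 : In (mkS (st (S i - 1) 0) 15 0 0 0 (st (S i) 6)) specs) by (eapply in_fil; [|left; reflexivity]; lia).
  assert (I2 : In (mkS (st (S i) 6) 9 (S i) 1 0 (st (S i) 6)) specs) by (eapply in_fil; [|right; left; reflexivity]; lia).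
  assert (I3 : In (mkS (st (S i) 6) 15 0 0 0 (st (S i) 0)) specs) by (eapply in_fil; [|right; right; left; reflexivity]; lia).
  replace (st i 0) with (st (S i - 1) 0) by (f_equal; lia).
  eapply rt_trans.
  { eapply (fire0' (mkS (st (S i - 1) 0) 15 0 0 0 (st (S i) 6))); [exact I1|reflexivity| | | |];
    simpl; try reflexivity; lia. }
  eapply rt_trans.
  { eapply (loop' (mkS (st (S i) 6) 9 (S i) 1 0 (st (S i) 6)) _ _ _ _ _ _ (fln (S i)));
    [exact I2|reflexivity|simpl; lia| | | |reflexivity]; simpl.
    - intros m Hm. lia.
    - reflexivity.
    - reflexivity. }
  eapply (fire0' (mkS (st (S i) 6) 15 0 0 0 (st (S i) 0))); [exact I3|reflexivity| | | |];
    simpl; try lia.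
Qed.

Lemma upto i : (i <= n)%nat ->
  reach 2 VV (cfg (st 0 0) (Gup 0) (Z.of_nat (cn 0)) 0) (cfg (st i 0) (Gup (S i)) (Z.of_nat (cn i)) 0).
Proof.
  induction i as [|i IH]; intros Hi.
  - pose proof (level 0 Hi) as L. unfold fln in L. simpl in L. rewrite gadd_0 in L. exact L.
  - eapply rt_trans; [apply IH; lia|]. eapply rt_trans; [apply trans_fill; lia|]. apply level; auto.
Qed.

Lemma begin_run : reach 2 VV (cfg 0 zerog 0 0) (cfg (st 0 0) (Gup 0) (Z.of_nat (cn 0)) 0).
Proof.
  assert (I1 : In (mkS 0 10 0 Az 0 (st 0 0)) specs) by (apply in_glob; left; reflexivity).
  assert (I2 : In (mkS (st 0 0) 11 0 0 0 (st 0 0)) specs) by (apply in_glob; right; left; reflexivity).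
  assert (HG : Gup 0 = gadd (gadd zerog 10 0 1) 11 0 (Rl 0)).
  { extensionality k. extensionality l. unfold Gup, gadd, zerog.
    destruct (Nat.ltb_spec l 0); [lia|].
    destruct k as [|[|[|[|[|[|[|[|[|[|[|[|k]]]]]]]]]]]]; simpl Nat.leb; simpl Nat.eqb; cbv iota beta; try lia.
    all: unfold Gf; destruct (Nat.eqb_spec l 0); simpl; lia. }
  rewrite HG, cn_0.
  eapply rt_trans.
  { eapply (fire1' (mkS 0 10 0 Az 0 (st 0 0))); [exact I1|simpl; lia| | | | |reflexivity];
    simpl; try reflexivity; unfold Az; lia. }
  eapply (loop' (mkS (st 0 0) 11 0 0 0 (st 0 0)) _ _ _ _ _ _ (Rl 0));
    [exact I2|reflexivity|simpl; lia| | | |reflexivity]; simpl.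
  - intros m Hm. unfold Az. lia.
  - unfold Az. lia.
  - lia.
Qed.

Lemma end_run : reach 2 VV (cfg (st n 0) (Gup (S n)) (Z.of_nat (cn n)) 0) (cfg 1 Gf (Z.of_nat (cn n)) (Z.of_nat C)).
Proof.
  assert (I1 : In (mkS (st n 0) 15 0 0 0 1) specs) by (apply in_glob; right; right; left; reflexivity).
  assert (I2 : In (mkS 1 12 0 0 1 1) specs) by (apply in_glob; do 3 right; left; reflexivity).
  assert (I3 : In (mkS 1 13 0 0 0 1) specs) by (apply in_glob; do 4 right; left; reflexivity).
  assert (I4 : In (mkS 1 14 0 0 0 1) specs) by (apply in_glob; do 5 right; left; reflexivity).
  assert (HG : Gf = gadd (gadd (gadd (Gup (S n)) 12 0 C) 13 0 (C * cn n)) 14 0 (cn n)).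
  { extensionality k. extensionality l. unfold Gup, gadd.
    destruct k as [|[|[|[|[|[|[|[|[|[|[|[|[|[|[|k]]]]]]]]]]]]]]]; simpl Nat.leb; simpl Nat.eqb; rewrite ?Bool.andb_false_l, ?Bool.andb_true_l; cbv iota beta;
      try (destruct (Nat.ltb_spec l (S n)); [lia|]).
    - rewrite F0b by lia. lia.
    - rewrite F1, mr_gt by lia. lia.
    - rewrite F2, mr_gt by lia. lia.
    - rewrite F3, mr_gt by lia. lia.
    - rewrite F4, mr_gt by lia. lia.
    - rewrite F5, mr_gt by lia. lia.
    - rewrite F6, mr_gt by lia. lia.
    - rewrite F7, mr_gt by lia. lia.
    - rewrite F8, mr_gt by lia. lia.
    - rewrite F9b by lia. lia.
    - cbn [orb]. lia.
    - cbn [orb]. lia.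
    - unfold Gf. destruct (Nat.eqb_spec l 0); simpl; lia.
    - unfold Gf. destruct (Nat.eqb_spec l 0); simpl; lia.
    - unfold Gf. destruct (Nat.eqb_spec l 0); simpl; lia.
    - unfold Gf. simpl. lia. }
  rewrite HG.
  eapply rt_trans.
  { eapply (fire0' (mkS (st n 0) 15 0 0 0 1)); [exact I1|reflexivity| | | |]; simpl; try reflexivity; lia. }
  eapply rt_trans.
  { eapply (loop' (mkS 1 12 0 0 1 1) _ _ _ _ _ _ C); [exact I2|reflexivity|simpl; lia| | | |reflexivity]; simpl.
    - intros m Hm. lia.
    - reflexivity.
    - reflexivity. }
  eapply rt_trans.
  { eapply (loop' (mkS 1 13 0 0 0 1) _ _ _ _ _ _ (C * cn n)); [exact I3|reflexivity|simpl; lia| | | |reflexivity]; simpl.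
    - intros m Hm. lia.
    - reflexivity.
    - reflexivity. }
  eapply (loop' (mkS 1 14 0 0 0 1) _ _ _ _ _ _ (cn n)); [exact I4|reflexivity|simpl; lia| | | |reflexivity]; simpl.
  - intros m Hm. lia.
  - lia.
  - lia.
Qed.


Lemma cfgv_zero : cfgv zerog 0 0 = zeros NN.
Proof.
  apply nth_ext with (d := 0) (d' := 0).
  - unfold cfgv, zeros. rewrite mkvec_length, repeat_length. reflexivity.
  - intros j Hj. unfold cfgv in *. rewrite mkvec_length in Hj. rewrite mkvec_nth by auto.
    unfold zeros. rewrite nth_repeat. destruct (Nat.eqb j 0); auto. destruct (Nat.eqb j 1); auto.
    apply Fvec_zero.
Qed.

Lemma cfgv_final : cfgv Gf (Z.of_nat (cn n)) (Z.of_nat C) =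
  [Z.of_nat (cn n); Z.of_nat C; Z.of_nat C * Z.of_nat (cn n)] ++ zeros (NN - 3).
Proof.
  pose proof NN_ge.
  apply nth_ext with (d := 0) (d' := 0).
  - unfold cfgv, zeros. rewrite mkvec_length, length_app, repeat_length. cbn [length]. unfold NN. lia.
  - intros j Hj. unfold cfgv in *. rewrite mkvec_length in Hj. rewrite mkvec_nth by auto.
    destruct j as [|[|[|j]]]; cbn [nth app Nat.eqb]; auto.
    + unfold Fvec. simpl. apply F13.
    + unfold zeros. rewrite nth_repeat.
      destruct j as [|j]. { reflexivity. }
      replace (S (S (S (S j)))) with (4 + 7 * (j / 7) + j mod 7)%nat by (pose proof (Nat.div_mod_eq j 7); lia).
      rewrite Fvec_code by (apply Nat.mod_upper_bound; lia).
      apply Gf_cnt; [|apply Nat.mod_upper_bound; lia].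
      unfold NN in Hj. assert (j < 7 * (n + 2))%nat by lia.
      apply Nat.lt_succ_r. apply Nat.Div0.div_lt_upper_bound. lia.
Qed.

Lemma full_run : reach 2 VV (0%nat, zeros NN)
  (1%nat, [Z.of_nat (cn n); Z.of_nat C; Z.of_nat C * Z.of_nat (cn n)] ++ zeros (NN - 3)).
Proof.
  rewrite <- cfgv_zero, <- cfgv_final.
  change (0%nat, cfgv zerog 0 0) with (cfg 0 zerog 0 0).
  change (1%nat, cfgv Gf (Z.of_nat (cn n)) (Z.of_nat C)) with (cfg 1 Gf (Z.of_nat (cn n)) (Z.of_nat C)).
  eapply rt_trans; [apply begin_run|]. eapply rt_trans; [apply (upto n); lia|]. apply end_run.
Qed.


Lemma spec_bounds s : In s specs ->
  (src s < 9 + 7 * n)%nat /\ (tgt s < 9 + 7 * n)%nat /\ Z.abs (d0 s) <= Az + 1 /\ Z.abs (d1 s) <= 1.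
Proof.
  intros Hs. assert (0 <= Az) by (unfold Az; lia).
  apply in_specs in Hs.
  destruct Hs as [E|[E|[E|[E|[E|[E|[[i [l [Hi [Hl [E|[E|E]]]]]]|[[i [Hi [E|E]]]|[i [Hi [E|[E|E]]]]]]]]]]]];
    subst s; cbn [src tgt d0 d1]; unfold st; lia.
Qed.

Lemma tvec_bound s j : In s specs -> Z.abs (tvec s j) <= 2 * Az + 10.
Proof.
  intros Hs. pose proof (spec_bounds s Hs) as [_ [_ [B0 B1]]]. assert (0 <= Az) by (unfold Az; lia).
  unfold tvec. destruct (Nat.eqb j 0); [lia|]. destruct (Nat.eqb j 1); [lia|].
  apply Fvec_bound. intros k l. unfold unitg. destruct (_ && _ && _)%bool; lia.
Qed.

Lemma norm1_map (f : nat -> Z) l B : (forall j, Z.abs (f j) <= Z.of_nat B) -> (norm1 (map f l) <= length l * B)%nat.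
Proof.
  intros HB. induction l as [|a l IH]; simpl; [lia|]. specialize (HB a). lia.
Qed.

Lemma fold_bound (l : list (nat * list Z * nat)) M :
  (forall t, In t l -> (norm1 (snd (fst t)) <= M)%nat) ->
  (fold_right (fun t acc => (norm1 (snd (fst t)) + acc)%nat) 0%nat l <= length l * M)%nat.
Proof.
  induction l as [|a l IH]; intros H; simpl; [lia|].
  assert (fold_right (fun t acc => (norm1 (snd (fst t)) + acc)%nat) 0%nat l <= length l * M)%nat.
  { apply IH. intros; apply H; auto. right; auto. }
  specialize (H a (or_introl eq_refl)). lia.
Qed.

Lemma length_flat_map_c {X Y} (f : X -> list Y) l m : (forall x, length (f x) = m) -> length (flat_map f l) = (m * length l)%nat.
Proof. intros H. induction l; simpl; auto. rewrite length_app, H, IHl. lia. Qed.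

Lemma specs_length : length specs = (6 + 14 * (n + 1) + 3 * n)%nat.
Proof.
  unfold specs. rewrite !length_app. rewrite (length_flat_map_c lev _ 14), (length_flat_map_c fil _ 3).
  - rewrite !length_seq. simpl. lia.
  - intros; reflexivity.
  - intros; reflexivity.
Qed.

Lemma VV_wf : wf_VASS 2 (NN - 2) VV.
Proof.
  intros p v q Hin. unfold VV in Hin. cbn [trans nstates] in *. apply in_map_iff in Hin.
  destruct Hin as [s [Hs Hin]]. unfold mkT in Hs. injection Hs as E1 E2 E3. subst.
  pose proof (spec_bounds s Hin) as [B1 [B2 _]]. cbn [nstates]. split; [auto|split; [auto|]].
  rewrite mkvec_length. pose proof NN_ge. lia.
Qed.

Definition cst : nat := (9 + 360 * (2 * A + 10))%nat.

Lemma VV_size : (vass_size VV <= cst * (n + 1) ^ cst)%nat.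
Proof.
  unfold vass_size, VV. cbn [nstates trans].
  assert (Hf : (fold_right (fun t acc => (norm1 (snd (fst t)) + acc)%nat) 0%nat (map mkT specs)
             <= length (map mkT specs) * (NN * (2 * A + 10)))%nat).
  { apply fold_bound. intros t Ht. apply in_map_iff in Ht. destruct Ht as [s [<- Hs]].
    unfold mkT. cbn [fst snd]. unfold mkvec.
    eapply Nat.le_trans; [apply norm1_map with (B := (2 * A + 10)%nat)|rewrite length_seq; lia].
    intros j. pose proof (tvec_bound s j Hs). unfold Az in *. lia. }
  rewrite length_map, specs_length in Hf.
  assert (H2 : ((n + 1) ^ 2 <= (n + 1) ^ cst)%nat) by (apply Nat.pow_le_mono_r; unfold cst; lia).
  assert (H3 : (cst * (n + 1) ^ 2 <= cst * (n + 1) ^ cst)%nat) by (apply Nat.mul_le_mono_l; auto).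
  enough ((9 + 7 * n + (6 + 14 * (n + 1) + 3 * n) * (NN * (2 * A + 10)) <= cst * (n + 1) ^ 2)%nat) by lia.
  unfold NN, cst. rewrite Nat.pow_2_r. nia.
Qed.

End Dev.

Theorem lemma12 (A : nat) :
  exists (k : nat -> nat) (V : nat -> VASS) (c : nat),
    (forall n, (vass_size (V n) <= c * (n + 1) ^ c)%nat) /\
    forall n, wf_VASS 2 (k n) (V n) /\
      computes 2 (k n) 3 (V n) (target_set (Z.of_nat (A ^ (2 ^ n))%nat)).
Proof.
  exists (fun n => (NN n - 2)%nat), (fun n => VV A n), (cst A).
  split; [intros n; apply VV_size|].
  intros n. split; [apply VV_wf|].
  pose proof (NN_ge n) as HN.
  split; [lia|]. split.
  { intros v [B ->]. reflexivity. }
  exists 0%nat, 1%nat. split; [cbn [nstates VV]; lia|]. split; [cbn [nstates VV]; lia|].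
  intros v Hv. replace (2 + (NN n - 2))%nat with (NN n) by lia.
  split.
  - intros [B ->]. pose proof (full_run A n B) as R. unfold cn in R.
    replace (Z.of_nat B * Z.of_nat (A ^ 2 ^ n)) with (Z.of_nat (A ^ 2 ^ n) * Z.of_nat B)%Z in * by lia.
    exact R.
  - intros R. apply Inv_final; auto. eapply Inv_reach; [exact R|]. apply Inv_init.
Qed.
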